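(* A point $\mathbf{x}\in\Delta^0$ is a global maximizer of the problem $\max\{f(\mathbf{x}):\mathbf{x}\in\Delta^0\}$ if and only if $\mathbf{x}=\mathbf{x}(C)$ for some maximum clique $C$ of $G$.
   Context: Let $G=(\mathcal{V},\mathcal{E})$ be a simple undirected graph on vertex set $\mathcal{V}=\{1,\dots,n\}$ with adjacency matrix $\mathbf{A}=(a_{ij})$ ($a_{ij}=1$ if $(i,j)\in\mathcal{E}$, else $0$; $a_{ii}=0$). A clique is a subset $C\subseteq\mathcal{V}$ with $(i,j)\in\mathcal{E}$ for all distinct $i,j\in C$; a maximum clique is one of largest cardinality. Let $\Delta=\{\mathbf{x}\in\mathbb{R}^n:\mathbf{0}\le\mathbf{x}\le\mathbf{1},\ \mathbf{1}^{\mathsf T}\mathbf{x}=1\}$, $\mathrm{supp}(\mathbf{x})=\{i:x_i\neq0\}$, and $\Delta^0=\{\mathbf{x}\in\Delta:\mathrm{supp}(\mathbf{x})\text{ is a clique}\}$. For a non-empty clique $C$, $\mathbf{x}(C)\in\Delta$ has $x(C)_i=1/|C|$ for $i\in C$ and $0$ otherwise. For $\mathbf{x}\in\Delta$, $\mathcal{P}(\mathbf{x})$ is the set of vectors in $\Delta$ obtained by permuting the coordinates of $\mathbf{x}$. Let $\Phi:X\to\mathbb{R}$ be twice continuously differentiable on an open set $X\supset\Delta$, satisfying for every $\mathbf{x}\in\Delta$: (C1) $\nabla^2\Phi(\mathbf{x})$ is positive semidefinite; (C2) $\|\nabla^2\Phi(\mathbf{x})\|_2<2$; (C3) $\Phi$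 is constant on $\mathcal{P}(\mathbf{x})$. Define $f(\mathbf{x})=\mathbf{x}^{\mathsf T}\mathbf{A}\mathbf{x}+\Phi(\mathbf{x})$. *)

(* Defs.v *)
From HB Require Import structures.
From mathcomp Require Import all_boot all_order all_algebra all_fingroup.
From mathcomp Require Import all_classical all_reals all_analysis.
Set Implicit Arguments. Unset Strict Implicit. Unset Printing Implicit Defensive.
Import Order.TTheory GRing.Theory Num.Theory.
Import numFieldNormedType.Exports.
Local Open Scope classical_set_scope.
Local Open Scope ring_scope.

Section Defs.
Variables (R : realType) (n : nat).

Definition simple_graph (adj : rel 'I_n) : Prop :=
  (forall i j, adj i j = adj j i) /\ (forall i, ~~ adj i i).

Definition adjmx (adj : rel 'I_n) : 'M[R]_n := \matrix_(i, j) (adj i j)%:R.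

Definition is_clique (adj : rel 'I_n) (C : {set 'I_n}) : Prop :=
  forall i j, i \in C -> j \in C -> i != j -> adj i j.

Definition is_maximum_clique (adj : rel 'I_n) (C : {set 'I_n}) : Prop :=
  is_clique adj C /\ forall D : {set 'I_n}, is_clique adj D -> (#|D| <= #|C|)%N.

Definition simplex : set 'rV[R]_n :=
  [set x | (forall i, 0 <= x 0 i <= 1) /\ \sum_i x 0 i = 1].

Definition supp (x : 'rV[R]_n) : {set 'I_n} := [set i | x 0 i != 0].

Definition simplex0 (adj : rel 'I_n) : set 'rV[R]_n :=
  [set x | simplex x /\ is_clique adj (supp x)].

Definition xC (C : {set 'I_n}) : 'rV[R]_n :=
  \row_i (if i \in C then (#|C|%:R)^-1 else 0).

Definition permv (s : 'S_n) (x : 'rV[R]_n) : 'rV[R]_n := \row_i x 0 (s i).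

Definition evec (i : 'I_n) : 'rV[R]_n := \row_k (k == i)%:R.

Definition hessian (Phi : 'rV[R]_n -> R) (x : 'rV[R]_n) : 'M[R]_n :=
  \matrix_(i, j) derive (fun y => derive Phi y (evec j)) x (evec i).

Definition C2_on (X : set 'rV[R]_n) (Phi : 'rV[R]_n -> R) : Prop :=
  forall x, X x ->
    {for x, continuous Phi} /\
    forall i j : 'I_n,
      [/\ derivable Phi x (evec i),
          derivable (fun y => derive Phi y (evec j)) x (evec i),
          {for x, continuous (fun y => derive Phi y (evec i))} &
          {for x, continuous (fun y => derive (fun z => derive Phi z (evec j)) y (evec i))}].

Definition psd (H : 'M[R]_n) : Prop :=
  forall v : 'cV[R]_n, 0 <= (v^T *m H *m v) 0 0.

Definition enorm (u : 'cV[R]_n) : R := Num.sqrt (\sum_i u i 0 ^+ 2).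

Definition opnorm2 (H : 'M[R]_n) : R :=
  sup [set enorm (H *m u) | u in [set u : 'cV[R]_n | enorm u = 1]].

Definition fobj (adj : rel 'I_n) (Phi : 'rV[R]_n -> R) (x : 'rV[R]_n) : R :=
  (x *m adjmx adj *m x^T) 0 0 + Phi x.

End Defs.
Arguments simplex {R n}.
Arguments simplex0 {R n}.
Arguments xC {R n}.

(* Main.v *)
Require Import Defs.
From HB Require Import structures.
From mathcomp Require Import all_boot all_order all_algebra all_fingroup.
From mathcomp Require Import all_classical all_reals all_analysis.
From mathcomp Require Import ring lra.
Import Order.TTheory GRing.Theory Num.Theory.
Import numFieldNormedType.Exports.
Local Open Scope classical_set_scope.
Local Open Scope ring_scope.
Set Implicit Arguments. Unset Strict Implicit. Unset Printing Implicit Defensive.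

Section Analysis1.
Variable R : realType.

Lemma cvg_is_derive (V W : normedModType R) (f : V -> W) a v L :
  (fun h : R => h^-1 *: ((f \o shift a) (h *: v) - f a)) @ 0^' --> L ->
  is_derive a v f L.
Proof.
move=> H; split; first by apply/cvg_ex; exists L.
exact: cvg_lim.
Qed.

Lemma ball_rV n (a y : 'rV[R]_n) r : 0 < r -> (forall j, `|a 0 j - y 0 j| < r) -> ball a r y.
Proof. move=> r0 H; split => // i j; rewrite (ord1 i). exact: H. Qed.

Lemma near0' (P : R -> Prop) : (exists2 e : R, 0 < e & forall h, `|h| < e -> h != 0 -> P h) -> \forall h \near 0^', P h.
Proof. move=> [e e0 H]. rewrite near_withinE. apply/nbhs_ballP. exists e => // h. rewrite /ball /= sub0r normrN. move=> hb h0; exact: H. Qed.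

Variable n : nat.
Implicit Types (F : 'rV[R]_n -> R).

Lemma derive_line F (a d : 'rV[R]_n) (t : R) :
  derivable F (a + t *: d) d ->
  is_derive t 1 (fun s : R => F (a + s *: d)) (derive F (a + t *: d) d).
Proof.
move=> H; apply: cvg_is_derive.
have -> : (fun h : R => h^-1 *: ((((fun s : R => F (a + s *: d)) \o shift t) (h *: 1)) - F (a + t *: d)))
  = (fun h : R => h^-1 *: ((F \o shift (a + t *: d)) (h *: d) - F (a + t *: d))).
  apply: funext => h /=. congr (_ *: (F _ - _)).
  by rewrite [_%:A]mulr1 scalerDl addrCA.
exact: H.
Qed.

Lemma MVT0 (f df : R -> R) (w : R) :
  (forall s : R, `|s| <= `|w| -> is_derive s (1:R) f (df s)) ->
  exists c, `|c| <= `|w| /\ f w - f 0 = df c * w.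
Proof.
move=> H.
have cont : forall s : R, `|s| <= `|w| -> {for s, continuous f}.
  move=> s hs; apply: differentiable_continuous; apply/derivable1_diffP.
  by have [] := H s hs.
have [w0|w0|->] := ltrgtP w 0; last by exists 0; rewrite normr0 subrr mulr0.
- have H1 : forall x, x \in `]w, 0[ -> is_derive x 1 f (df x).
    move=> x; rewrite in_itv /= => /andP[x1 x2]; apply: H.
    by rewrite !ltr0_norm // lerN2 ltW.
  have H2 : {within `[w, 0], continuous f}.
    apply: continuous_in_subspaceT => x; rewrite inE /= in_itv /= => /andP[x1 x2].
    by apply: cont; rewrite ler0_norm // ltr0_norm // lerN2.
  have [c cI E] := MVT_segment (ltW w0) H1 H2.
  exists c; move: cI; rewrite in_itv /= => /andP[c1 c2].
  split; first by rewrite ler0_norm // ltr0_norm // lerN2.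
  by rewrite -[LHS]opprB E sub0r mulrN opprK.
- have H1 : forall x, x \in `]0, w[ -> is_derive x 1 f (df x).
    move=> x; rewrite in_itv /= => /andP[x1 x2]; apply: H.
    by rewrite !gtr0_norm // ltW.
  have H2 : {within `[0, w], continuous f}.
    apply: continuous_in_subspaceT => x; rewrite inE /= in_itv /= => /andP[x1 x2].
    by apply: cont; rewrite ger0_norm // gtr0_norm.
  have [c cI E] := MVT_segment (ltW w0) H1 H2.
  exists c; move: cI; rewrite in_itv /= => /andP[c1 c2].
  by split; [rewrite ger0_norm // gtr0_norm | rewrite E subr0].
Qed.

Definition tr (k : nat) (d : 'rV[R]_n) : 'rV[R]_n :=
  \row_j (if (j < k)%N then d 0 j else 0).

Lemma tr0 d : tr 0 d = 0.
Proof. by apply/rowP => j; rewrite !mxE. Qed.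

Lemma trn d : tr n d = d.
Proof. by apply/rowP => j; rewrite !mxE ltn_ord. Qed.

Lemma trS (k : 'I_n) d : tr k.+1 d = tr k d + d 0 k *: evec R k.
Proof.
apply/rowP => j; rewrite !mxE ltnS.
have [jk|jk|jk] := ltngtP j k.
- by rewrite -val_eqE /= (ltn_eqF jk) mulr0 addr0.
- by rewrite -val_eqE /= (gtn_eqF jk) mulr0 addr0.
- have E : j = k by apply: val_inj.
  by rewrite E eqxx mulr1 add0r.
Qed.

Section PD.
Variables (F : 'rV[R]_n -> R) (X : set 'rV[R]_n).
Hypothesis Xo : open X.
Hypothesis hd : forall x, X x -> forall i, derivable F x (evec R i).
Hypothesis hc : forall x, X x -> forall i, {for x, continuous (fun y => derive F y (evec R i))}.

Lemma PD_term a (Xa : X a) d (k : 'I_n) :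
  (fun h : R => h^-1 * (F (a + h *: tr k.+1 d) - F (a + h *: tr k d))) @ 0^'
    --> d 0 k * derive F a (evec R k).
Proof.
have [r r0 rX] : exists2 r : R, 0 < r & ball a r `<=` X.
  by apply/nbhs_ballP; apply: open_nbhs_nbhs; split.
apply/cvgrPdist_lt => eps eps0.
set b := d 0 k.
set eps' := eps / (`|b| + 1).
have b10 : 0 < `|b| + 1 by rewrite ltr_wpDl.
have eps'0 : 0 < eps' by rewrite divr_gt0.
have := @hc a Xa k; move/cvgrPdist_lt => /(_ eps' eps'0) /nbhs_ballP [del del0 delH].
set M := \sum_j `|d 0 j| + 1.
have M0 : 0 < M by rewrite ltr_wpDl ?sumr_ge0.
have dM : forall j, `|d 0 j| <= M.
  by move=> j; rewrite /M (bigD1 j) //= -addrA lerDl addr_ge0 ?sumr_ge0.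
set rho := Num.min r del.
have rho0 : 0 < rho by rewrite lt_min r0 del0.
have rr : rho <= r by rewrite /rho ge_min lexx.
have rd : rho <= del by rewrite /rho ge_min lexx orbT.
apply: near0'; exists (rho / M); first by rewrite divr_gt0.
move=> h hlt h0.
have hM : `|h| * M < rho by rewrite -ltr_pdivlMr.
have inball : forall s : R, `|s| <= `|h * b| ->
    ball a rho (a + h *: tr k d + s *: evec R k).
  move=> s hs; apply: ball_rV => // j.
  rewrite !mxE -addrA opprD addrA subrr sub0r normrN.
  have [->|jk] := eqVneq j k.
    rewrite ltnn mulr0 add0r mulr1.
    apply: (le_lt_trans hs); apply: le_lt_trans hM.
    by rewrite normrM; apply: ler_wpM2l => //; exact: dM.
  case: (@eqP _ j k) => [E|_]; first by move: jk; rewrite E eqxx.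
  rewrite mulr0 addr0 normrM.
  apply: le_lt_trans hM; apply: ler_wpM2l => //.
  by case: ifP => _; rewrite ?normr0 ?dM ?ltW.
pose p := a + h *: tr k d.
pose f := fun s : R => F (p + s *: evec R k).
pose df := fun s : R => derive F (p + s *: evec R k) (evec R k).
have [c [cw E]] : exists c, `|c| <= `|h * b| /\ f (h * b) - f 0 = df c * (h * b).
  apply: MVT0 => s hs; apply: derive_line; apply: hd.
  by apply: rX; apply: (le_ball rr); apply: inball.
have -> : F (a + h *: tr k d) = f 0 by rewrite /f scale0r addr0.
rewrite trS scalerDr addrA scalerA -/p -/(f (h * b)) E.
rewrite mulrCA mulKf // mulrC -mulrBl normrM mulrC.
have cb : `|derive F a (evec R k) - df c| < eps'.
  apply: (delH (p + c *: evec R k)).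
  by apply: (le_ball rd); apply: inball.
apply: (le_lt_trans (ler_wpM2l (normr_ge0 b) (ltW cb))).
rewrite /eps' mulrA ltr_pdivrMr // mulrDr mulr1 mulrC ltrDl //.
Qed.

Lemma PD a (Xa : X a) d :
  is_derive a d F (\sum_(k < n) d 0 k * derive F a (evec R k)).
Proof.
apply: cvg_is_derive.
have -> : (fun h : R => h^-1 *: ((F \o shift a) (h *: d) - F a)) =
   (fun h => \sum_(k < n) h^-1 * (F (a + h *: tr k.+1 d) - F (a + h *: tr k d))).
  apply: funext => h /=.
  rewrite -mulr_sumr.
  rewrite -(big_mkord xpredT (fun k => F (a + h *: tr k.+1 d) - F (a + h *: tr k d))).
  by rewrite telescope_sumr // trn tr0 scaler0 addr0 [h *: d + a]addrC.
have addc : continuous (fun z : R * R => z.1 + z.2) by exact: add_continuous.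
apply: (@cvg_big _ _ +%R 0 xpredT addc) => // k _.
exact: PD_term.
Qed.

End PD.
End Analysis1.
Section Analysis3.
Variable R : realType.

Lemma cont_seg (f df : R -> R) (a b : R) :
  (forall t, a <= t <= b -> is_derive t (1:R) f (df t)) -> {within `[a, b], continuous f}.
Proof.
move=> H; apply: continuous_in_subspaceT => x; rewrite inE /= in_itv /= => xab.
apply: differentiable_continuous; apply/derivable1_diffP.
by have [] := H x xab.
Qed.

Lemma is_derive_sq (C t : R) : is_derive t (1:R) (fun s : R => C * (s * s)) (C * (2 * t)).
Proof.
have H := is_deriveZ C (is_deriveM (is_derive_id t (1:R)) (is_derive_id t (1:R))).
apply: (is_derive_eq H).
rewrite /= [_ *: 1]mulr1. rewrite /GRing.scale /=. ring.
Qed.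

Lemma is_derive_lin (C t : R) : is_derive t (1:R) (fun s : R => C * (2 * s)) (C * 2).
Proof.
have H := is_deriveZ (C * 2) (is_derive_id t (1:R)).
have E : (fun s : R => C * (2 * s)) = (C * 2) \*: id.
  by apply: funext => s /=; rewrite mulrA.
rewrite E; apply: (is_derive_eq H).
by rewrite /= [_ *: 1]mulr1.
Qed.

Lemma concave1 (phi phi1 phi2 : R -> R) (C : R) :
  (forall t : R, 0 <= t <= 1 -> is_derive t (1:R) phi (phi1 t)) ->
  (forall t : R, 0 <= t <= 1 -> is_derive t (1:R) phi1 (phi2 t)) ->
  (forall t : R, 0 <= t <= 1 -> phi2 t < 2 * C) ->
  phi 1 - phi 0 - phi1 0 < C.
Proof.
move=> d0 d1 d2.
pose r s := phi s - C * (s * s).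
pose r1 s := phi1 s - C * (2 * s).
pose r2 s := phi2 s - C * 2.
have dr : forall t : R, 0 <= t <= 1 -> is_derive t (1:R) r (r1 t).
  by move=> t ht; apply: is_deriveB; [exact: d0|exact: is_derive_sq].
have dr1 : forall t : R, 0 <= t <= 1 -> is_derive t (1:R) r1 (r2 t).
  by move=> t ht; apply: is_deriveB; [exact: d1|exact: is_derive_lin].
have [xi xiI E1] : exists2 xi, xi \in `]0, 1[ & r 1 - r 0 = r1 xi * (1 - 0).
  apply: MVT => //; first by move=> x; rewrite in_itv /= => /andP[? ?]; apply: dr; rewrite !ltW.
  by apply: cont_seg.
move: xiI; rewrite in_itv /= => /andP[xi0 xi1].
have [eta etaI E2] : exists2 eta, eta \in `]0, xi[ & r1 xi - r1 0 = r2 eta * (xi - 0).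
  apply: MVT => //.
    move=> x; rewrite in_itv /= => /andP[? ?]; apply: dr1; rewrite !ltW //.
    exact: lt_trans xi1.
  apply: cont_seg => t /andP[t0 t1]; apply: dr1; rewrite t0 /=.
  exact: le_trans (ltW xi1).
move: etaI; rewrite in_itv /= => /andP[eta0 eta1].
have r2n : r2 eta < 0.
  rewrite /r2 subr_lt0 mulrC; apply: d2; rewrite ltW //= ltW //.
  exact: lt_trans xi1.
have : r1 xi < r1 0.
  by rewrite -subr_lt0 E2 subr0 pmulr_llt0.
move: E1; rewrite /r /r1 subr0 !mulr1 !mulr0 subr0 => E1.
set u := C * (2 * xi); rewrite -/u in E1.
lra.
Qed.

End Analysis3.
Section Norms.
Variables (R : realType) (n : nat).

Lemma sqr_normr (x : R) : `|x| ^+ 2 = x ^+ 2.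
Proof. exact: real_normK (num_real x). Qed.

Lemma enormZ c (u : 'cV[R]_n) : enorm (c *: u) = `|c| * enorm u.
Proof.
rewrite /enorm; under eq_bigr do rewrite mxE exprMn.
by rewrite -mulr_sumr sqrtrM ?sqrtr_sqr // sqr_ge0.
Qed.

Lemma enorm_sq (u : 'cV[R]_n) : enorm u ^+ 2 = \sum_i u i 0 ^+ 2.
Proof. by rewrite /enorm sqr_sqrtr // sumr_ge0 // => i _; rewrite sqr_ge0. Qed.

Lemma enorm_ge0 (u : 'cV[R]_n) : 0 <= enorm u.
Proof. exact: sqrtr_ge0. Qed.

Lemma opn_bound (H : 'M[R]_n) (u : 'cV[R]_n) :
  enorm u = 1 -> enorm (H *m u) <= opnorm2 H.
Proof.
move=> u1; apply: sup_upper_bound; last by exists u.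
split; first by exists (enorm (H *m u)); exists u.
exists (Num.sqrt (\sum_i (\sum_k `|H i k|) ^+ 2)) => z [u' /= u'1 <-].
rewrite /enorm ler_sqrt; last by rewrite sumr_ge0 // => i _; rewrite sqr_ge0.
apply: ler_sum => i _.
have uk : forall k, `|u' k 0| <= 1.
  move=> k.
  have : u' k 0 ^+ 2 <= 1.
    rewrite -(expr1n R 2) -u'1 enorm_sq (bigD1 k) //= lerDl.
    by rewrite sumr_ge0 // => j _; rewrite sqr_ge0.
  rewrite -sqr_normr => h.
  have := normr_ge0 (u' k 0); nra.
have hb : `|(H *m u') i 0| <= \sum_k `|H i k|.
  rewrite mxE; apply: le_trans (ler_norm_sum _ _ _) _.
  apply: ler_sum => k _; rewrite normrM.
  by apply: ler_piMr => //.
rewrite -sqr_normr.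
have := normr_ge0 ((H *m u') i 0); nra.
Qed.

Lemma hess_bound (H : 'M[R]_n) (v : 'rV[R]_n) :
  opnorm2 H < 2 -> v != 0 ->
  \sum_k v 0 k * \sum_i v 0 i * H i k < 2 * \sum_k v 0 k ^+ 2.
Proof.
move=> Hn v0.
set S := \sum_k v 0 k ^+ 2.
have S0 : 0 < S.
  rewrite lt_def sumr_ge0 ?andbT; last by move=> k _; rewrite sqr_ge0.
  apply/negP => /eqP E0.
  have h := psumr_eq0P (fun k _ => sqr_ge0 (v 0 k)) E0.
  move/negP: v0; apply; apply/eqP/rowP => k.
  by rewrite mxE; apply/eqP; rewrite -sqrf_eq0; apply/eqP; apply: h.
set u : 'cV[R]_n := v^T.
set w := H *m u.
have NS : enorm u ^+ 2 = S by rewrite enorm_sq; apply: eq_bigr => k _; rewrite mxE.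
have N0 : 0 < enorm u by rewrite /enorm sqrtr_gt0 -(enorm_sq u) NS.
have u1 : enorm ((enorm u)^-1 *: u) = 1.
  by rewrite enormZ ger0_norm ?invr_ge0 ?enorm_ge0 // mulVf // gt_eqF.
have hw : enorm w < 2 * enorm u.
  have := opn_bound H u1; rewrite -scalemxAr enormZ ger0_norm ?invr_ge0 ?enorm_ge0 //.
  move=> h; have := le_lt_trans h Hn.
  by rewrite ltr_pdivrMl // mulrC.
have W4 : \sum_i w i 0 ^+ 2 < 4 * S.
  rewrite -enorm_sq -NS.
  have := enorm_ge0 w; nra.
have E : \sum_k v 0 k * \sum_i v 0 i * H i k = \sum_i v 0 i * w i 0.
  under eq_bigr do rewrite mulr_sumr.
  rewrite exchange_big /=; apply: eq_bigr => i _.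
  rewrite /w mxE mulr_sumr; apply: eq_bigr => k _.
  by rewrite /u mxE; ring.
rewrite E.
have : \sum_i v 0 i * w i 0 <= S + (\sum_i w i 0 ^+ 2) / 4.
  rewrite /S mulr_suml -big_split /=; apply: ler_sum => i _.
  set a := v 0 i; set b := w i 0.
  have h : 0 <= (a - b / 2) ^+ 2 by rewrite sqr_ge0.
  have -> : a ^+ 2 + b ^+ 2 / 4 = (a - b / 2) ^+ 2 + a * b by field.
  by rewrite lerDr.
move: W4; set W := \sum_i w i 0 ^+ 2; set Q := \sum_i v 0 i * w i 0.
lra.
Qed.

End Norms.

Section Key.
Variables (R : realType) (n : nat) (Phi : 'rV[R]_n -> R) (X : set 'rV[R]_n).
Hypothesis Xo : open X.
Hypothesis C2 : C2_on X Phi.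

Let G j := fun y => derive Phi y (evec R j).

Lemma hd1 x : X x -> forall i, derivable Phi x (evec R i).
Proof. by move=> Xx i; have [_ /(_ i i) []] := C2 Xx. Qed.
Lemma hc1 x : X x -> forall i, {for x, continuous (fun y => derive Phi y (evec R i))}.
Proof. by move=> Xx i; have [_ /(_ i i) []] := C2 Xx. Qed.
Lemma hd2 j x : X x -> forall i, derivable (G j) x (evec R i).
Proof. by move=> Xx i; have [_ /(_ i j) []] := C2 Xx. Qed.
Lemma hc2 j x : X x -> forall i, {for x, continuous (fun y => derive (G j) y (evec R i))}.
Proof. by move=> Xx i; have [_ /(_ i j) []] := C2 Xx. Qed.

Lemma line1 x d t : X (x + t *: d) ->
  is_derive t (1:R) (fun s => Phi (x + s *: d)) (\sum_k d 0 k * G k (x + t *: d)).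
Proof.
move=> Xp; have [P1 P2] := PD Xo hd1 hc1 Xp d.
by apply: is_derive_eq (derive_line P1) _.
Qed.

Lemma line2 x d t : X (x + t *: d) ->
  is_derive t (1:R) (fun s => \sum_k d 0 k * G k (x + s *: d))
    (\sum_k d 0 k * \sum_i d 0 i * hessian Phi (x + t *: d) i k).
Proof.
move=> Xp.
have -> : (fun s => \sum_k d 0 k * G k (x + s *: d)) =
   \sum_k (d 0 k \*: (fun s => G k (x + s *: d))).
  by apply: funext => s; rewrite fct_sumE.
apply: is_derive_sum => k; apply: is_deriveZ.
have [Q1 Q2] := PD Xo (@hd2 k) (@hc2 k) Xp d.
apply: is_derive_eq (derive_line Q1) _.
rewrite Q2; apply: eq_bigr => i _.
by rewrite /hessian mxE.
Qed.

Lemma simplex_conv (x y : 'rV[R]_n) t : simplex x -> simplex y -> 0 <= t <= 1 ->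
  simplex (x + t *: (y - x)).
Proof.
move=> [xb xs] [yb ys] /andP[t0 t1]; split.
  move=> i; rewrite !mxE; have /andP[? ?] := xb i; have /andP[? ?] := yb i.
  by apply/andP; split; nra.
rewrite (eq_bigr (fun i => x 0 i + t * (y 0 i - x 0 i))); last by move=> i _; rewrite !mxE.
by rewrite big_split /= -mulr_sumr sumrB xs ys subrr mulr0 addr0.
Qed.

Hypothesis XS : simplex `<=` X.
Hypothesis Hb : forall x, simplex x -> opnorm2 (hessian Phi x) < 2.

Lemma KEY (x y : 'rV[R]_n) : simplex x -> simplex y -> x != y ->
  Phi y - Phi x - \sum_k (y - x) 0 k * G k x < \sum_k (y - x) 0 k ^+ 2.
Proof.
move=> sx sy xy.
set d := y - x.
have Xt : forall t : R, 0 <= t <= 1 -> X (x + t *: d).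
  by move=> t ht; apply: XS; apply: simplex_conv.
have d0 : d != 0 by rewrite subr_eq0 eq_sym.
have := @concave1 R (fun s => Phi (x + s *: d)) (fun s => \sum_k d 0 k * G k (x + s *: d))
  (fun s => \sum_k d 0 k * \sum_i d 0 i * hessian Phi (x + s *: d) i k)
  (\sum_k d 0 k ^+ 2).
rewrite scale1r scale0r addr0 /d.
have -> : x + (y - x) = y by rewrite addrC subrK.
apply.
- by move=> t ht; apply: line1; apply: Xt.
- by move=> t ht; apply: line2; apply: Xt.
- move=> t ht; apply: hess_bound => //.
  by apply: Hb; apply: simplex_conv.
Qed.
End Key.



Section Comb.
Variables (R : realType) (n : nat).

Lemma evec_eq (i : 'I_n) : (evec R i) 0 i = 1.
Proof. by rewrite mxE eqxx. Qed.

Lemma evec_neq (i k : 'I_n) : k != i -> (evec R i) 0 k = 0.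
Proof. by move=> ki; rewrite mxE; case: eqP => // E; move: ki; rewrite E eqxx. Qed.

Lemma sum_evec (F : 'I_n -> R) i : \sum_k (evec R i) 0 k * F k = F i.
Proof.
rewrite (bigD1 i) //= evec_eq mul1r big1 ?addr0 // => k ki.
by rewrite evec_neq // mul0r.
Qed.

Lemma xCE (T : {set 'I_n}) k : (xC T : 'rV[R]_n) 0 k = if k \in T then #|T|%:R^-1 else 0.
Proof. by rewrite mxE. Qed.

Lemma xC_simplex (T : {set 'I_n}) : (0 < #|T|)%N -> simplex (xC T : 'rV[R]_n).
Proof.
move=> T1.
have t0 : 0 < #|T|%:R^-1 :> R by rewrite invr_gt0 ltr0n.
have t1 : #|T|%:R^-1 <= 1 :> R by rewrite invf_le1 ?ler1n // ltr0n.
split.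
  by move=> k; rewrite xCE; case: ifP => _; rewrite ?lexx ?ler01 ?(ltW t0) ?t1.
rewrite (eq_bigr (fun k => if k \in T then #|T|%:R^-1 else 0)); last by move=> k _; rewrite xCE.
rewrite -big_mkcond /= sumr_const -[_ *+ #|T|]mulr_natr mulVf //.
by rewrite pnatr_eq0 -lt0n.
Qed.

Lemma supp_xC (T : {set 'I_n}) : (0 < #|T|)%N -> supp (xC T : 'rV[R]_n) = T.
Proof.
move=> T1.
apply/setP => k; rewrite inE xCE; case: ifP => // _.
by rewrite invr_eq0 pnatr_eq0 -lt0n T1.
by rewrite eqxx.
Qed.

Lemma sum_zero (d g : 'I_n -> R) (T : {set 'I_n}) g0 :
  (forall k, k \in T -> g k = g0) -> (forall k, k \notin T -> d k = 0) ->
  \sum_k d k = 0 -> \sum_k d k * g k = 0.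
Proof.
move=> hg hd s0.
rewrite (eq_bigr (fun k => d k * g0)); first by rewrite -mulr_suml s0 mul0r.
move=> k _; case: (boolP (k \in T)) => kT; first by rewrite hg.
by rewrite hd // !mul0r.
Qed.

End Comb.

Section Sym.
Variables (R : realType) (n : nat) (Phi : 'rV[R]_n -> R) (X : set 'rV[R]_n).
Hypothesis Xo : open X.
Hypothesis C2 : C2_on X Phi.
Hypothesis XS : simplex `<=` X.
Hypothesis Hsym : forall x (s : 'S_n), simplex x -> Phi (permv s x) = Phi x.

Let G j := fun y => derive Phi y (evec R j).

Lemma SYM (T : {set 'I_n}) i j : i \in T -> j \in T ->
  G i (xC T) = G j (xC T).
Proof.
move=> iT jT; have [->//|ij] := eqVneq i j.
set c : 'rV[R]_n := xC T.
have T2 : (2 <= #|T|)%N.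
  have <- : #|[set i; j]%SET| = 2%N by rewrite cards2 ij.
  apply: subset_leq_card.
  by apply/fintype.subsetP => k; rewrite !inE => /orP[] /eqP ->.
have T1 : (0 < #|T|)%N by apply: leq_trans T2.
set t : R := #|T|%:R^-1.
have t0 : 0 < t by rewrite invr_gt0 ltr0n.
have t2 : t <= 2^-1.
  rewrite lef_pV2 ?posrE ?ltr0n //; first by rewrite ler_nat.
have Xc : X c by apply: XS; apply: xC_simplex.
set v : 'rV[R]_n := evec R i - evec R j.
have [Hv1 Hv2] := PD Xo (hd1 C2) (hc1 C2) Xc v.
have [Hn1 Hn2] := PD Xo (hd1 C2) (hc1 C2) Xc (- v).
have Ev : \sum_k v 0 k * derive Phi c (evec R k) = G i c - G j c.
  rewrite (eq_bigr (fun k => (evec R i) 0 k * G k c - (evec R j) 0 k * G k c)).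
    by rewrite sumrB !sum_evec.
  by move=> k _; rewrite !mxE mulrBl.
have En : \sum_k (- v) 0 k * derive Phi c (evec R k) = - (G i c - G j c).
  rewrite -Ev -sumrN; apply: eq_bigr => k _.
  by rewrite mxE mulNr.
have aE : forall (h : R) (w : 'rV[R]_n) k, (h *: w + c) 0 k = h * w 0 k + c 0 k.
  by move=> h w k; rewrite !mxE.
have vE : forall k, v 0 k = (evec R i) 0 k - (evec R j) 0 k by move=> k; rewrite !mxE.
have nvE : forall k, (- v) 0 k = - v 0 k by move=> k; rewrite !mxE.
have ji : j != i by rewrite eq_sym.
have ci : c 0 i = t by rewrite /c mxE; case: ifP => // /negbT/negP/(_ iT).
have cj : c 0 j = t by rewrite /c mxE; case: ifP => // /negbT/negP/(_ jT).
have cb : forall k, 0 <= c 0 k <= t.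
  by move=> k; rewrite /c mxE; case: ifP => _; rewrite ?lexx ?ltW.
have NE : \forall h \near 0^',
   (fun h : R => h^-1 *: ((Phi \o shift c) (h *: v) - Phi c)) h =
   (fun h : R => h^-1 *: ((Phi \o shift c) (h *: - v) - Phi c)) h.
  apply: near0'; exists t => // h hh h0 /=.
  move/ltr_normlP: hh => [hl hr].
  have sz : simplex (h *: v + c).
    split.
      move=> k; rewrite aE vE.
      have [->|ki] := eqVneq k i.
        rewrite evec_eq (evec_neq R ij) ci; apply/andP; split; lra.
      have [->|kj] := eqVneq k j.
        rewrite evec_eq (evec_neq R ji) cj; apply/andP; split; lra.
      rewrite !evec_neq // subrr mulr0 add0r.
      by have /andP[? ?] := cb k; apply/andP; split; lra.
    rewrite (eq_bigr (fun k => h * ((evec R i) 0 k * 1 - (evec R j) 0 k * 1) + c 0 k)).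
      rewrite big_split /= -mulr_sumr sumrB !sum_evec subrr mulr0 add0r.
      by have [] := xC_simplex R T1.
    by move=> k _; rewrite aE vE !mulr1.
  congr (_ *: (_ - _)).
  rewrite -(Hsym (tperm i j) sz); congr Phi.
  apply/rowP => k; rewrite [LHS]mxE !aE nvE !vE.
  have [->|ki] := eqVneq k i.
    rewrite tpermL !evec_eq (evec_neq R ij) (evec_neq R ji) ci cj; lra.
  have [->|kj] := eqVneq k j.
    rewrite tpermR !evec_eq (evec_neq R ij) (evec_neq R ji) ci cj; lra.
  rewrite tpermD 1?eq_sym // !evec_neq //; lra.
have qv : (fun h : R => h^-1 *: ((Phi \o shift c) (h *: v) - Phi c)) @ 0^' --> derive Phi c v := Hv1.
have qn : (fun h : R => h^-1 *: ((Phi \o shift c) (h *: - v) - Phi c)) @ 0^' --> derive Phi c v.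
  exact: cvg_trans (near_eq_cvg NE) qv.
have E : derive Phi c (- v) = derive Phi c v by apply: cvg_lim qn.
move: E; rewrite Hn2 Hv2 En Ev => E.
by apply/eqP; rewrite -subr_eq0; apply/eqP; lra.
Qed.

End Sym.

Section Main.
Variables (R : realType) (n : nat) (Phi : 'rV[R]_n -> R) (X : set 'rV[R]_n).
Hypothesis Xo : open X.
Hypothesis C2 : C2_on X Phi.
Hypothesis XS : simplex `<=` X.
Hypothesis Hb : forall x, simplex x -> opnorm2 (hessian Phi x) < 2.
Hypothesis Hsym : forall x (s : 'S_n), simplex x -> Phi (permv s x) = Phi x.

Definition gg (y : 'rV[R]_n) := Phi y - \sum_k y 0 k ^+ 2.

Lemma xC_out (T : {set 'I_n}) k : k \notin T -> (xC T : 'rV[R]_n) 0 k = 0.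
Proof. by move=> kT; rewrite xCE; case: ifP => // kT'; move: kT; rewrite kT'. Qed.

Lemma xC_in (T : {set 'I_n}) k : k \in T -> (xC T : 'rV[R]_n) 0 k = #|T|%:R^-1.
Proof. by move=> kT; rewrite xCE kT. Qed.

Lemma supp_out (y : 'rV[R]_n) (T : {set 'I_n}) k : supp y \subset T -> k \notin T -> y 0 k = 0.
Proof.
move=> sT kT; apply/eqP; apply: contraR kT => yk.
by apply: (fintype.subsetP sT); rewrite inE.
Qed.

Lemma GoalA (T : {set 'I_n}) (y : 'rV[R]_n) : (0 < #|T|)%N -> simplex y ->
  supp y \subset T -> y != xC T -> gg y < gg (xC T).
Proof.
move=> T1 sy yT yc.
set c : 'rV[R]_n := xC T.
have sc : simplex c := xC_simplex R T1.
have cy : c != y by rewrite eq_sym.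
have K := KEY Xo C2 XS Hb sc sy cy.
have [i0 i0T] := card_gt0P T1.
set d := fun k => (y - c) 0 k.
have dE : forall k, (y - c) 0 k = y 0 k - c 0 k by move=> k; rewrite !mxE.
have dout : forall k, k \notin T -> d k = 0.
  by move=> k kT; rewrite /d dE (supp_out yT kT) xC_out // subrr.
have dsum : \sum_k d k = 0.
  rewrite /d (eq_bigr (fun k => y 0 k - c 0 k)); last by move=> k _; rewrite dE.
  by rewrite sumrB; case: sy => _ ->; case: sc => _ ->; rewrite subrr.
have S1 : \sum_k d k * derive Phi c (evec R k) = 0.
  apply: (@sum_zero R n d _ T (derive Phi c (evec R i0))) => // k kT.
  exact: (SYM Xo C2 XS Hsym kT i0T).
have S2 : \sum_k d k * c 0 k = 0.
  apply: (@sum_zero R n d _ T (#|T|%:R^-1)) => // k kT.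
  exact: xC_in.
have Y2 : \sum_k y 0 k ^+ 2 = \sum_k c 0 k ^+ 2 + 2 * \sum_k d k * c 0 k + \sum_k d k ^+ 2.
  rewrite mulr_sumr -!big_split /=; apply: eq_bigr => k _.
  rewrite /d dE; ring.
move: K; rewrite -/d S1 S2 mulr0 addr0 in Y2 *.
rewrite /gg Y2 => K.
lra.
Qed.

Lemma gg_perm (x : 'rV[R]_n) (s : 'S_n) : simplex x -> gg (permv s x) = gg x.
Proof.
move=> sx; rewrite /gg Hsym //; congr (_ - _).
rewrite [RHS](reindex_inj (@perm_inj _ s)) /=.
by apply: eq_bigr => k _; rewrite mxE.
Qed.

Lemma swap_xC (T : {set 'I_n}) a b : a \notin T -> b \in T ->
  permv (tperm a b) (xC T : 'rV[R]_n) = xC (a |: (T :\ b)) /\ #|a |: (T :\ b)| = #|T|.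
Proof.
move=> aT bT.
have ab : a != b by apply: contraNneq aT => ->.
have cT : #|a |: (T :\ b)| = #|T|.
  rewrite cardsU1 (cardsD1 b T) bT in_setD1 (negbTE aT) andbF /=.
  by rewrite add1n.
split => //; apply/rowP => k; rewrite [LHS]mxE !xCE cT.
have -> : (tperm a b k \in T) = (k \in a |: (T :\ b)).
  rewrite !inE.
  have [->|ka] := eqVneq k a; first by rewrite tpermL bT.
  have [->|kb] := eqVneq k b; first by rewrite tpermR (negbTE aT).
  by rewrite tpermD // eq_sym.
by [].
Qed.

Lemma eqcard (S T : {set 'I_n}) : (0 < #|S|)%N -> #|S| = #|T| ->
  gg (xC S) = gg (xC T).
Proof.
move=> S1; move: {2}(#|S :\: T|) (leqnn #|S :\: T|) => N.
elim: N T => [|N IH] T.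
  rewrite leqn0 cards_eq0 finset.setD_eq0 => ST cST.
  have -> : S = T by apply/eqP; rewrite eqEcard ST cST leqnn.
  by [].
move=> hN cST.
have [/eqP|] := eqVneq #|S :\: T| 0%N.
  rewrite cards_eq0 finset.setD_eq0 => ST.
  have -> : S = T by apply/eqP; rewrite eqEcard ST cST leqnn.
  by [].
rewrite -lt0n => D0.
have [a] := card_gt0P D0; rewrite inE => /andP[aT aS].
have D1 : (0 < #|T :\: S|)%N.
  move: D0; rewrite !cardsD finset.setIC cST.
  by [].
have [b] := card_gt0P D1; rewrite inE => /andP[bS bT].
have [E cT'] := swap_xC aT bT.
have T1 : (0 < #|T|)%N by rewrite -cST.
rewrite -(gg_perm (tperm a b) (xC_simplex R T1)) E.
apply: IH; last by rewrite cT'.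
have sub : S :\: (a |: (T :\ b)) \proper S :\: T.
  apply/properP; split.
    apply/fintype.subsetP => x; rewrite !inE negb_or => /andP[/andP[xa]].
    rewrite negb_and negbK => /orP[/eqP xb|xT] xS.
      by move: bS; rewrite -xb xS.
    by rewrite xT xS.
  by exists a; rewrite !inE ?eqxx //= aT aS.
by rewrite -ltnS (leq_trans (proper_card sub)).
Qed.

Lemma exists_out (S T : {set 'I_n}) : (#|S| < #|T|)%N -> exists a, a \notin S.
Proof.
move=> lt; case: (pickP (fun a => a \notin S)) => [a aS | none]; first by exists a.
have h1 : (#|'I_n| <= #|S|)%N.
  by rewrite -cardsT; apply: subset_leq_card; apply/fintype.subsetP => x _; move: (none x) => /= /negbFE.
have h2 : (#|T| <= #|'I_n|)%N by apply: max_card.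
by move: (leq_trans h2 h1); rewrite leqNgt lt.
Qed.

Lemma step (S : {set 'I_n}) a : (0 < #|S|)%N -> a \notin S ->
  gg (xC S) < gg (xC (a |: S)) /\ #|a |: S| = (#|S|).+1.
Proof.
move=> S1 aS; have cS' : #|a |: S| = (#|S|).+1 by rewrite cardsU1 aS.
split => //.
apply: GoalA; first by rewrite cS'.
- exact: xC_simplex.
- by rewrite supp_xC //; apply: finset.subsetU1.
- apply/eqP => /rowP /(_ a); rewrite xC_out // xC_in ?setU11 //.
  by move/eqP; rewrite eq_sym invr_eq0 pnatr_eq0 cS'.
Qed.

Lemma mono k (S T : {set 'I_n}) : (0 < #|S|)%N -> (#|S| + k.+1)%N = #|T| ->
  gg (xC S) < gg (xC T).
Proof.
elim: k S => [|k IH] S S1 cST.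
  have [a aS] : exists a, a \notin S by apply: (@exists_out S T); rewrite -cST addn1 ltnSn.
  have [lt c'] := step S1 aS.
  rewrite -(@eqcard (a |: S) T) //; first by rewrite c'.
  by rewrite c' -cST addn1.
have [a aS] : exists a, a \notin S by apply: (@exists_out S T); by rewrite -cST addnS ltnS leq_addr.
have [lt c'] := step S1 aS.
apply: lt_trans lt (IH _ _ _); first by rewrite c'.
by rewrite c' addSnnS.
Qed.

End Main.

Section Final.
Variables (R : realType) (n : nat) (adj : rel 'I_n) (Phi : 'rV[R]_n -> R).

Lemma quad (y : 'rV[R]_n) : simple_graph adj -> simplex0 adj y ->
  fobj adj Phi y = 1 + gg Phi y.
Proof.
move=> [_ irr] [[_ sy] cly].
rewrite /fobj /gg.
suff -> : (y *m adjmx R adj *m y^T) 0 0 = 1 - \sum_k y 0 k ^+ 2 by lra.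
have pt : forall i j, y 0 i * (adjmx R adj) i j * y 0 j =
    y 0 i * y 0 j - (if i == j then y 0 i * y 0 j else 0).
  move=> i j; rewrite mxE.
  have [->|ij] := eqVneq i j.
    by rewrite (negbTE (irr j)) mulr0 mul0r subrr.
  have [yi|yi] := eqVneq (y 0 i) 0; first by rewrite yi !mul0r subrr.
  have [yj|yj] := eqVneq (y 0 j) 0; first by rewrite yj !mulr0 subrr.
  have -> : adj i j by apply: cly => //; rewrite inE.
  by rewrite mulr1 subr0.
rewrite mxE (eq_bigr (fun j => \sum_i y 0 i * (adjmx R adj) i j * y 0 j)); last first.
  by move=> j _; rewrite !mxE mulr_suml.
rewrite (eq_bigr (fun j => \sum_i (y 0 i * y 0 j - (if i == j then y 0 i * y 0 j else 0))));
  last by move=> j _; apply: eq_bigr => i _; rewrite pt.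
rewrite (eq_bigr (fun j => y 0 j - y 0 j ^+ 2)).
  by rewrite sumrB sy.
move=> j _; rewrite sumrB -big_mkcond /= big_pred1_eq -mulr_suml sy mul1r.
by rewrite expr2.
Qed.

Lemma supp_gt0 (y : 'rV[R]_n) : simplex y -> (0 < #|supp y|)%N.
Proof.
move=> [_ sy]; rewrite lt0n; apply/negP => /eqP /cards0_eq E.
have : \sum_k y 0 k = 0.
  apply: big1 => k _.
  have : k \notin supp y by rewrite E inE.
  by rewrite inE negbK => /eqP.
by rewrite sy; apply/eqP; rewrite oner_eq0.
Qed.

End Final.



Section Final2.
Variables (R : realType) (n : nat) (adj : rel 'I_n) (X : set 'rV[R]_n) (Phi : 'rV[R]_n -> R).
Hypothesis Xo : open X.
Hypothesis C2 : C2_on X Phi.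
Hypothesis XS : simplex `<=` X.
Hypothesis Hb : forall x, simplex x -> opnorm2 (hessian Phi x) < 2.
Hypothesis Hsym : forall x (s : 'S_n), simplex x -> Phi (permv s x) = Phi x.

Lemma le_gg_supp (y : 'rV[R]_n) : simplex y -> gg Phi y <= gg Phi (xC (supp y)).
Proof.
move=> sy; have [E|ne] := eqVneq y (xC (supp y)); first by rewrite -E.
apply: ltW; apply: (GoalA Xo C2 XS Hb Hsym) => //; exact: supp_gt0.
Qed.

Lemma le_card (S T : {set 'I_n}) : (0 < #|S|)%N -> (#|S| <= #|T|)%N ->
  gg Phi (xC S) <= gg Phi (xC T).
Proof.
move=> S1; rewrite leq_eqVlt => /orP[/eqP E|lt].
  by rewrite (eqcard Hsym S1 E).
apply: ltW; apply: (mono Xo C2 XS Hb Hsym (k := (#|T| - #|S|).-1)) => //.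
by rewrite prednK ?subn_gt0 // subnKC // ltnW.
Qed.

Lemma main_sec : simple_graph adj ->
  forall x : 'rV[R]_n, simplex0 adj x ->
    ((forall y, simplex0 adj y -> fobj adj Phi y <= fobj adj Phi x) <->
     exists C : {set 'I_n}, is_maximum_clique adj C /\ x = xC C).
Proof.
move=> sg x [sx clx].
set S := supp x.
have S1 : (0 < #|S|)%N := supp_gt0 sx.
case: (@arg_maxnP _ S (fun C => `[< is_clique adj C >]) (fun C => #|C|) (asboolT clx)).
move=> C /asboolP Ccl Cmax.
have SC : (#|S| <= #|C|)%N by apply: Cmax; apply/asboolP.
have C1 : (0 < #|C|)%N by apply: leq_trans SC.
split.
  move=> Hmax.
  have s0C : simplex0 adj (xC C : 'rV[R]_n).
    by split; [exact: xC_simplex | rewrite supp_xC].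
  have h1 := Hmax _ s0C.
  rewrite !(quad _ sg) // lerD2l in h1.
  have h2 : gg Phi x <= gg Phi (xC S) := le_gg_supp sx.
  have eqSC : #|S| = #|C|.
    apply/eqP; rewrite eqn_leq SC /=; rewrite leqNgt; apply/negP => lt.
    have e : (#|S| + ((#|C| - #|S|).-1).+1)%N = #|C|.
      by rewrite prednK ?subn_gt0 // subnKC // ltnW.
    have h3 := mono Xo C2 XS Hb Hsym S1 e.
    by have := lt_le_trans h3 (le_trans h1 h2); rewrite ltxx.
  exists S; split.
    split => // D cD; rewrite eqSC; apply: Cmax; exact/asboolP.
  apply/eqP; apply/negP => /negP ne.
  have := GoalA Xo C2 XS Hb Hsym S1 sx (fintype.subxx _) ne.
  rewrite (eqcard Hsym S1 eqSC) => h3.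
  by have := lt_le_trans h3 h1; rewrite ltxx.
move=> [C' [[Ccl' Cmax'] Ex]] y [sy cly].
rewrite (quad Phi sg (conj sy cly)) (quad Phi sg (conj sx clx)) Ex.
rewrite lerD2l.
have Sy1 := supp_gt0 sy.
have le1 : (#|supp y| <= #|C'|)%N by apply: Cmax'.
apply: le_trans (le_gg_supp sy) _.
exact: le_card.
Qed.

End Final2.

Unset Implicit Arguments.

Theorem corollary1 (R : realType) (n : nat) (adj : rel 'I_n)
    (X : set 'rV[R]_n) (Phi : 'rV[R]_n -> R) :
  simple_graph adj ->
  open X -> simplex `<=` X ->
  C2_on X Phi ->
  (forall x, simplex x -> psd (hessian Phi x)) ->
  (forall x, simplex x -> opnorm2 (hessian Phi x) < 2) ->
  (forall x (s : 'S_n), simplex x -> Phi (permv s x) = Phi x) ->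
  forall x : 'rV[R]_n, simplex0 adj x ->
    ((forall y, simplex0 adj y -> fobj adj Phi y <= fobj adj Phi x) <->
     exists C : {set 'I_n}, is_maximum_clique adj C /\ x = xC C).
Proof.
move=> sg Xo XS C2 _ Hb Hsym.
exact: (main_sec Xo C2 XS Hb Hsym sg).
Qed.
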